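(* Let $w\in S_n$ be inverse fireworks. For each $r\in[n]$, $\mathsf{rajcode}(w)_r=\left|\{r'>r:\ (r,r')\in\mathsf{Inv}(w),\ \text{or } \big(w(r')>w(r)\text{ and }(r',r'')\in\mathsf{Inv}(w)\text{ for some }r''\big)\}\right|.$
   Context: A permutation is fireworks if the initial elements of its maximal decreasing runs (in one-line notation) are increasing; $w$ is inverse fireworks if $w^{-1}$ is fireworks. $\mathsf{Inv}(w)=\{(i,j):i<j,w(i)>w(j)\}$. $\mathrm{LIS}^w(q)$ is the length of the longest increasing subsequence of $w$ starting with $q$, and $\mathsf{rajcode}(w)_r=n+1-r-\mathrm{LIS}^w(w(r))$ for $r\in[n]$. *)

(* Defs.v *)
(* Permutations of [n] are modelled as 'S_n acting on 'I_n,
   i.e. positions and values are 0-indexed ({0,...,n-1} instead of {1,...,n}). *)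
From mathcomp Require Import all_boot all_order all_fingroup.
Set Implicit Arguments. Unset Strict Implicit. Unset Printing Implicit Defensive.

Definition is_inversion {n} (w : 'S_n) (i j : 'I_n) : bool := (i < j) && (w j < w i).

(* Position i starts a maximal decreasing run of the one-line notation
   w(0) w(1) ... w(n-1): either i = 0 or w(i-1) < w(i). *)
Definition run_start {n} (w : 'S_n) (i : 'I_n) : bool :=
  (i == 0 :> nat) || [exists j : 'I_n, (j.+1 == i :> nat) && (w j < w i)].

Definition fireworks {n} (w : 'S_n) : bool :=
  [forall i : 'I_n, forall j : 'I_n,
     (run_start w i && run_start w j && (i < j)) ==> (w i < w j)].

Definition inverse_fireworks {n} (w : 'S_n) : bool := fireworks w^-1.

(* S is (the set of positions of) an increasing subsequence of w starting at
   position r, i.e. starting with the value w(r). *)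
Definition inc_from {n} (w : 'S_n) (r : 'I_n) (S : {set 'I_n}) : bool :=
  (r \in S) && [forall i in S, r <= i] &&
  [forall i in S, forall j in S, (i < j) ==> (w i < w j)].

Definition LIS_from {n} (w : 'S_n) (r : 'I_n) : nat :=
  \max_(S : {set 'I_n} | inc_from w r S) #|S|.

(* rajcode(w)_r = n + 1 - r - LIS^w(w(r)) for 1-indexed r; with the 0-indexed
   position r this is n - r - LIS. *)
Definition rajcode {n} (w : 'S_n) (r : 'I_n) : nat := n - r - LIS_from w r.

(* Main.v *)
Require Import Defs.
From mathcomp Require Import all_boot all_order all_fingroup.
From mathcomp Require Import zify.
Set Implicit Arguments. Unset Strict Implicit.

Lemma cnt_iota n k : count (fun i => k < i) (iota 0 n) = n - k.+1.
Proof.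
elim: n => [|n IH] //.
rewrite -[in iota _ _]addn1 iotaD count_cat /= add0n addn0 IH.
case: (ltnP k n) => Hkn; lia.
Qed.

Lemma cardgt n (r : 'I_n) : #|[set s : 'I_n | r < s]| = n - r.+1.
Proof.
rewrite -cnt_iota -val_enum_ord count_map cardE /enum_mem size_filter [RHS]count_filter.
by apply: eq_count => i; rewrite /= !inE ?andbT.
Qed.

Lemma perm_val_inj n (u : 'S_n) (a b : 'I_n) : (u a : nat) = u b -> a = b.
Proof. by move=> H; apply: (perm_inj (s := u)); apply: val_inj. Qed.
Arguments perm_val_inj {n u a b}.

Lemma runstart_below n (u : 'S_n) k : forall c : 'I_n, nat_of_ord c = k ->
  exists c' : 'I_n, [/\ c' <= c, run_start u c' & u c <= u c'].
Proof.
elim: k => [|k IH] c Hc.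
  by exists c; split => //; rewrite /run_start Hc eqxx.
case Hrs: (run_start u c); first by exists c; split.
have Hk : k < n by have := ltn_ord c; lia.
pose d := Ordinal Hk.
have Hud : u c < u d.
  have Hn : ~~ (u d < u c).
    apply: contraFN Hrs => H; rewrite /run_start; apply/orP; right.
    by apply/existsP; exists d; rewrite Hc /= eqxx H.
  case: (ltngtP (u c) (u d)) Hn => // H _.
  have := perm_val_inj H => Hcd; move: Hc; rewrite Hcd /=; lia.
have [c' [H1 H2 H3]] := IH d erefl.
exists c'; split => //; rewrite /= in H1; lia.
Qed.

Lemma keyL n (w : 'S_n) : inverse_fireworks w -> forall p q t : 'I_n,
  p < q -> (w q : nat) = (w p).+1 -> q < t -> w p < w t.
Proof.
move=> Hw p q t Hpq Hwq Hqt.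
case: (ltngtP (w p) (w t)) => // H; last first.
  have := perm_val_inj H => Hpt; move: Hpq; rewrite Hpt; lia.
have [c' [Hc1 Hc2 Hc3]] := @runstart_below n (w^-1)%g _ (w t) erefl.
rewrite permK in Hc3.
move: Hw; rewrite /inverse_fireworks /fireworks => /forallP /(_ c') /forallP /(_ (w q)) /implyP H'.
have : (w^-1)%g c' < (w^-1)%g (w q).
  apply: H'; rewrite Hc2 /=; apply/andP; split; last by lia.
  apply/orP; right; apply/existsP; exists (w p).
  by rewrite !permK Hwq eqxx Hpq.
rewrite permK; lia.
Qed.

Definition Cset n (w : 'S_n) (r : 'I_n) : {set 'I_n} :=
  [set t : 'I_n | (r < t) && (w r < w t) && ~~ [exists u : 'I_n, is_inversion w t u]].

Lemma Cdec n (w : 'S_n) (r s : 'I_n) : inverse_fireworks w ->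
  r < s -> w r < w s -> #|Cset w s| < #|Cset w r|.
Proof.
move=> Hw Hrs Hws.
apply: proper_card; apply/properP; split.
  apply/subsetP => t; rewrite !inE => /andP[/andP[H1 H2] H3]; rewrite H3 andbT.
  apply/andP; split; lia.
have Hex : (fun t : 'I_n => (r < t) && (w r < w t)) s by rewrite /= Hrs Hws.
case: (@arg_minnP _ s (fun t : 'I_n => (r < t) && (w r < w t)) (fun t : 'I_n => (w t : nat)) Hex) => p /andP[Hrp Hwp] Hmin.
exists p.
  rewrite inE Hrp Hwp /=; apply/existsP => -[u /andP[Hpu Hwu]].
  have Hlt : (w p).-1 < n by have := ltn_ord (w p); lia.
  pose q := (w^-1)%g (Ordinal Hlt).
  have Hq : (w q : nat) = (w p).-1 by rewrite /q permKV.
  have Hqr : q <= r.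
    rewrite leqNgt; apply/negP => Hrq.
    case: (ltngtP (w r) (w q)) => Hc.
    - by have := Hmin q; rewrite Hrq Hc => /(_ erefl); lia.
    - lia.
    - have := perm_val_inj Hc => Hrq'; move: Hrq; rewrite Hrq'; lia.
  have := keyL Hw (p := q) (q := p) (t := u) ltac:(lia) ltac:(lia) Hpu.
  case: (ltngtP (w r) (w u)) => Hc.
  - have := Hmin u; rewrite Hc andbT => /(_ ltac:(lia)); lia.
  - lia.
  - have := perm_val_inj Hc => Hru; move: Hpu; rewrite -Hru; lia.
rewrite inE; apply/negP => /andP[/andP[_ H] _].
have := Hmin s; rewrite Hrs Hws => /(_ erefl); lia.
Qed.

Lemma LIS_upper n (w : 'S_n) : inverse_fireworks w -> forall k (r : 'I_n) S,
  n - r <= k -> inc_from w r S -> #|S| <= (#|Cset w r|).+1.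
Proof.
move=> Hw; elim => [|k IH] r S Hk HS.
  by have := ltn_ord r; lia.
move: HS; rewrite /inc_from => /andP[/andP[HrS /forallP Hge] /forallP Hinc].
rewrite (cardsD1 r S) HrS.
case: (set_0Vmem (S :\ r)) => [->| [s0 Hs0]]; first by rewrite cards0.
case: (arg_minnP (fun t : 'I_n => (t : nat)) Hs0) => s Hs Hsmin.
have Hs' : s \in S :\ r := Hs.
move: (Hs'); rewrite !inE => /andP[Hsr HsS].
have Hrs : r < s.
  have := Hge s; rewrite HsS /= => Hrs.
  rewrite ltn_neqAle Hrs andbT; apply: contra Hsr => /eqP H.
  by apply/eqP; apply: val_inj.
have Hws : w r < w s.
  by move: (Hinc r) => /implyP /(_ HrS) /forallP /(_ s) /implyP /(_ HsS) /implyP /(_ Hrs).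
have := IH s (S :\ r) ltac:(have := ltn_ord s; lia).
have Hinc' : inc_from w s (S :\ r).
  rewrite /inc_from Hs' /=; apply/andP; split.
    by apply/forallP => i; apply/implyP => Hi; apply: Hsmin.
  apply/forallP => i; apply/implyP; rewrite !inE => /andP[_ Hi].
  apply/forallP => j; apply/implyP; rewrite !inE => /andP[_ Hj].
  by move: (Hinc i) => /implyP /(_ Hi) /forallP /(_ j) /implyP /(_ Hj).
move=> /(_ Hinc') H1.
have H2 := Cdec Hw Hrs Hws; rewrite add1n ltnS; exact: leq_trans H1 H2.
Qed.

Lemma LIS_eq n (w : 'S_n) (r : 'I_n) : inverse_fireworks w ->
  LIS_from w r = (#|Cset w r|).+1.
Proof.
move=> Hw; apply/eqP; rewrite eqn_leq; apply/andP; split.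
  by apply/bigmax_leqP => S HS; apply: (LIS_upper Hw (k := n - r)).
have HS : inc_from w r (r |: Cset w r).
  rewrite /inc_from setU11 /=; apply/andP; split.
    apply/forallP => i; apply/implyP; rewrite !inE => /orP[/eqP -> //|].
    by move=> /andP[/andP[H _] _]; lia.
  apply/forallP => i; apply/implyP; rewrite !inE => Hi.
  apply/forallP => j; apply/implyP; rewrite !inE => Hj; apply/implyP => Hij.
  case/orP: Hi => [/eqP Hi|].
    case/orP: Hj => [/eqP Hj|]; first by move: Hij; rewrite Hi Hj ltnn.
    by rewrite Hi => /andP[/andP[_ H] _].
  move=> /andP[/andP[Hri _] Hn].
  case/orP: Hj => [/eqP Hj|]; first by move: Hij; rewrite Hj; lia.
  move=> _.
  have : ~~ is_inversion w i j by apply: contra Hn => H; apply/existsP; exists j.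
  rewrite /is_inversion Hij /= -leqNgt leq_eqVlt => /orP[/eqP H|//].
  have := perm_val_inj H => Hij'; move: Hij; rewrite Hij'; lia.
have := @leq_bigmax_cond _ (inc_from w r) (fun S : {set 'I_n} => #|S|) _ HS.
by rewrite cardsU1 inE ltnn.
Qed.

Theorem proposition5p9 (n : nat) (w : 'S_n) :
  inverse_fireworks w ->
  forall r : 'I_n,
    rajcode w r =
    #|[set s : 'I_n | (r < s)%N &&
         (is_inversion w r s ||
          ((w r < w s)%N && [exists t : 'I_n, is_inversion w s t]))]|.
Proof.
move=> Hw r.
rewrite /rajcode LIS_eq //.
have -> : [set s : 'I_n | (r < s)%N &&
         (is_inversion w r s ||
          ((w r < w s)%N && [exists t : 'I_n, is_inversion w s t]))]
   = [set s : 'I_n | r < s] :\: Cset w r.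
  apply/setP => s; rewrite !inE /is_inversion.
  case: (ltnP r s) => Hrs /=; last by []. rewrite andbT.
  case: (ltngtP (w r) (w s)) => H /=.
  - by rewrite negbK.
  - by [].
  - have := perm_val_inj H => Hrs'; move: Hrs; rewrite Hrs'; lia.
rewrite cardsD cardgt.
have -> : [set s : 'I_n | r < s] :&: Cset w r = Cset w r.
  apply/setIidPr; apply/subsetP => t; rewrite !inE => /andP[/andP[H _] _] //.
by rewrite -!subnDA addnS addSn.
Qed.
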